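(* Let $k>t+1$, $n>2k-t$, and let $\mathcal{S}_a$ be a maximal set of $k$-spaces in $\mathrm{AG}(n,q)$ pairwise intersecting in at least a $t$-space. Let $\psi(\mathcal{S}_a)=\min\{\dim T: T\text{ an affine subspace of }\mathrm{AG}(n,q),\ \dim(T\cap\alpha)\geq t\ \forall\alpha\in\mathcal{S}_a\}$ and let $\mathcal{T}$ be the set of all affine $\psi(\mathcal{S}_a)$-dimensional subspaces meeting every element of $\mathcal{S}_a$ in at least a $t$-space. Then: (1) $t\leq\psi(\mathcal{S}_a)\leq k$, and if $\psi(\mathcal{S}_a)=t$ then $\mathcal{S}_a$ is a $t$-pencil; (2) if $T\in\mathcal{T}$, all affine $k$-spaces containing $T$ belong to $\mathcal{S}_a$; (3) any two elements of $\mathcal{T}$ intersect (in $\mathrm{AG}(n,q)$) in at least a $t$-space.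
   Context: Affine subspaces intersect in at least a $t$-space if their affine intersection has dimension at least $t$. A $t$-pencil is the set of all affine $k$-spaces through a fixed affine $t$-space. Maximal means no further affine $k$-space can be added keeping the property. *)

(* Defs.v *)
(* AG(n,q) = points 'rV[F]_n over a finite field F (|F| = q). *)
From HB Require Import structures.
From mathcomp Require Import all_boot all_order all_algebra all_field.
Set Implicit Arguments. Unset Strict Implicit. Unset Printing Implicit Defensive.
Import GRing.Theory.
Local Open Scope ring_scope.

Section AG.
Variables (F : finFieldType) (n : nat).
Local Notation pt := 'rV[F]_n.

Definition is_aff (A : {set pt}) (d : nat) : Prop :=
  exists (p : pt) (U : {vspace pt}), (\dim U = d)%N /\ A = [set x | (x - p) \in U].

(* The (affine) intersection of A and B has dimension at least t, i.e. A ∩ B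
   contains an affine t-space (intersections of affine subspaces are affine). *)
Definition meets_ge (A B : {set pt}) (t : nat) : Prop :=
  exists C, is_aff C t /\ C \subset A :&: B.

Definition t_intersecting (k t : nat) (S : {set {set pt}}) : Prop :=
  (forall A, A \in S -> is_aff A k) /\
  (forall A B, A \in S -> B \in S -> meets_ge A B t).

Definition maximal_t_intersecting (k t : nat) (S : {set {set pt}}) : Prop :=
  t_intersecting k t S /\
  (forall B, is_aff B k -> B \notin S -> ~ t_intersecting k t (B |: S)).

Definition t_blocking (t : nat) (S : {set {set pt}}) (T : {set pt}) : Prop :=
  forall A, A \in S -> meets_ge T A t.

Definition is_psi (t : nat) (S : {set {set pt}}) (psi : nat) : Prop :=
  (exists T, is_aff T psi /\ t_blocking t S T) /\
  (forall d T, is_aff T d -> t_blocking t S T -> (psi <= d)%N).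

Definition is_pencil (k t : nat) (S : {set {set pt}}) : Prop :=
  exists P, is_aff P t /\ (forall A, A \in S <-> (is_aff A k /\ P \subset A)).

End AG.

(* Main.v *)
Require Import Defs.
From HB Require Import structures.
From mathcomp Require Import all_boot all_order all_algebra all_field.
From mathcomp Require Import zify.
Set Implicit Arguments. Unset Strict Implicit.
Import GRing.Theory.
Local Open Scope ring_scope.
Lemma subsub (K : fieldType) (vT : vectType K) (U : {vspace vT}) (t : nat) :
  (t <= \dim U)%N -> exists Y : {vspace vT}, (Y <= U)%VS /\ \dim Y = t.
Proof.
move=> ht.
have /andP[/eqP sX fX] := vbasisP U.
have fT : free (take t (vbasis U)).
  by apply: (@catl_free _ _ (drop t (vbasis U))); rewrite cat_take_drop.
exists <<take t (vbasis U)>>%VS; split.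
  apply/span_subvP => x /mem_take xX; rewrite -sX; exact: memv_span.
by rewrite (eqP fT) size_take size_tuple; case: ltngtP ht => // ->.
Qed.
Lemma dimrv (F : fieldType) n : \dim (fullv : {vspace 'rV[F]_n}) = n.
Proof. by rewrite dimvf /dim /= mul1n. Qed.

Lemma addline_dim (K : fieldType) (vT : vectType K) (U : {vspace vT}) x :
  x \notin U -> \dim (U + <[x]>)%VS = (\dim U).+1.
Proof.
move=> xU.
have x0 : x != 0 by apply: contraNneq xU => ->; rewrite mem0v.
have h := dimv_sum_cap U <[x]>; rewrite dim_vline x0 in h.
have : (\dim (U :&: <[x]>) < \dim <[x]>)%N.
  rewrite (ltn_leqif (dimv_leqif_sup (capvSr U <[x]>))) subv_cap subvv andbT.
  by apply: contra xU => /subvP; apply; exact: memv_line.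
rewrite dim_vline x0; lia.
Qed.

Lemma exists_notin (F : finFieldType) n (U : {vspace 'rV[F]_n}) :
  (\dim U < n)%N -> exists x, x \notin U.
Proof.
move=> hU; case: (pickP (fun x => x \notin U)) => [x hx|h]; first by exists x.
have : (fullv <= U)%VS by apply/subvP => x _; move: (h x) => /= /negbFE.
move/dimvS; rewrite dimvf /dim /= mul1n; lia.
Qed.

Definition good (K : fieldType) (vT : vectType K) t v (W1 W2 : {vspace vT}) :=
  (v \notin (W1 + W2)%VS) || (\dim (W1 :&: W2) < t)%N.

Lemma step (F : finFieldType) n k t v (W1 W2 : {vspace 'rV[F]_n}) :
  (\dim W1 < k)%N -> (\dim W2 <= k)%N -> (k <= n)%N -> (2 * k < n + t)%N ->
  good t v W1 W2 -> exists x, \dim (W1 + <[x]>)%VS = (\dim W1).+1 /\ good t v (W1 + <[x]>)%VS W2.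
Proof.
move=> h1 h2 hkn hn hg.
have dimf : \dim (fullv : {vspace 'rV[F]_n}) = n by rewrite dimvf /dim /= mul1n.
have hc := dimv_sum_cap.
case: (boolP ((W1 + W2 + <[v]>)%VS == fullv)) => [/eqP hZ | hZ].
- have [x hx] := exists_notin (leq_trans h1 hkn : (\dim W1 < n)%N).
  exists x; split; first exact: addline_dim.
  rewrite /good; case: (boolP (v \in _)) => //= hv.
  have : (fullv <= W1 + <[x]> + W2)%VS.
    rewrite -hZ !subv_add -!andbA; apply/and3P; split.
    + by rewrite -addvA addvSl.
    + by rewrite addvSr.
    + by apply/subvP => y /vlineP [a ->]; rewrite memvZ.
  move/dimvS; rewrite dimf => hf.
  have := hc _ _ (W1 + <[x]>)%VS W2; rewrite addline_dim //.
  have := dimvS (subvf (W1 + <[x]> + W2)%VS); rewrite dimf; lia.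
- have : (\dim (W1 + W2 + <[v]>) < n)%N.
    have hne : \dim (W1 + W2 + <[v]>) != n.
      by apply: contra hZ => /eqP hd; rewrite eqEdim subvf /= dimf hd.
    have := dimvS (subvf (W1 + W2 + <[v]>)%VS); rewrite dimf; lia.
  move=> /exists_notin [x hx]; exists x.
  have hx1 : x \notin W1.
    by apply: contra hx; apply: subvP; exact: subv_trans (addvSl W1 W2) (addvSl _ _).
  have hx12 : x \notin (W1 + W2)%VS.
    by apply: contra hx; apply: subvP; exact: addvSl.
  split; first exact: addline_dim.
  have eS : (W1 + <[x]> + W2 = (W1 + W2) + <[x]>)%VS by rewrite -!addvA [(<[x]> + _)%VS]addvC.
  have d1 := hc _ _ (W1 + <[x]>)%VS W2; have d2 := hc _ _ W1 W2.
  rewrite eS !addline_dim // in d1.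
  move: hg; rewrite /good; case/orP => [hv | hlt].
  + apply/orP; left; rewrite eS; apply: contra hx => hv'.
    have hsub : (W1 + W2 + <[v]> <= W1 + W2 + <[x]>)%VS.
      rewrite subv_add addvSl /=; apply/subvP => y /vlineP [a ->]; rewrite memvZ //.
    have : (W1 + W2 + <[v]> == W1 + W2 + <[x]>)%VS.
      by rewrite eqEdim hsub (addline_dim hv) (addline_dim hx12) /= leqnn.
    move/eqP => ->; exact: (subvP (addvSr _ _) _ (memv_line x)).
  + apply/orP; right; lia.
Qed.
Lemma ext1 (F : finFieldType) n k t v (W2 : {vspace 'rV[F]_n}) m :
  forall W1 : {vspace 'rV[F]_n},
  (\dim W1 + m = k)%N -> (\dim W2 <= k)%N -> (k <= n)%N -> (2 * k < n + t)%N ->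
  good t v W1 W2 -> exists W, (W1 <= W)%VS /\ \dim W = k /\ good t v W W2.
Proof.
elim: m => [|m IH] W1 hd h2 hkn hn hg.
  by exists W1; rewrite subvv addn0 in hd *.
have [x [hx hgx]] := @step F n k t v W1 W2 ltac:(lia) h2 hkn hn hg.
have [W [hW1 hW2]] := IH (W1 + <[x]>)%VS ltac:(lia) h2 hkn hn hgx.
by exists W; split=> //; exact: subv_trans (addvSl _ _) hW1.
Qed.

Lemma goodC (K : fieldType) (vT : vectType K) t v (W1 W2 : {vspace vT}) :
  good t v W1 W2 = good t v W2 W1.
Proof. by rewrite /good addvC capvC. Qed.

Lemma ext2 (F : finFieldType) n k t v (U1 U2 : {vspace 'rV[F]_n}) :
  (\dim U1 <= k)%N -> (\dim U2 <= k)%N -> (k <= n)%N -> (2 * k < n + t)%N ->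
  good t v U1 U2 -> exists W1 W2, [/\ (U1 <= W1)%VS, (U2 <= W2)%VS, \dim W1 = k,
     \dim W2 = k & good t v W1 W2].
Proof.
move=> h1 h2 hkn hn hg.
have [W1 [s1 [d1 g1]]] := @ext1 F n k t v U2 (k - \dim U1) U1 ltac:(lia) h2 hkn hn hg.
rewrite goodC in g1.
have [W2 [s2 [d2 g2]]] := @ext1 F n k t v W1 (k - \dim U2) U2 ltac:(lia) ltac:(lia) hkn hn g1.
by exists W1, W2; split=> //; rewrite goodC.
Qed.

Section Aff.
Variables (F : finFieldType) (n : nat).
Local Notation pt := 'rV[F]_n.
Local Notation aff p U := [set x : pt | (x - p) \in (U : {vspace pt})].

Lemma aff_sub (c p : pt) (Uc U : {vspace pt}) :
  aff c Uc \subset aff p U -> (Uc <= U)%VS /\ c - p \in U.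
Proof.
move=> /subsetP h.
have hc : c - p \in U by have := h c; rewrite !inE subrr mem0v => /(_ isT).
split=> //; apply/subvP => u hu.
have := h (c + u); rewrite !inE addrAC subrr add0r => /(_ hu) hcu.
have E : (c + u - p) - (c - p) = u.
  by rewrite opprB addrA subrK (addrC c u) addrK.
by rewrite -E; apply: memvB.
Qed.

Lemma bad_of_meets t (p1 p2 : pt) (W1 W2 : {vspace pt}) :
  meets_ge (aff p1 W1) (aff p2 W2) t -> p2 - p1 \in (W1 + W2)%VS /\ (t <= \dim (W1 :&: W2))%N.
Proof.
move=> [C [[c [Uc [hd ->]]] hs]].
have [s1 s2] : aff c Uc \subset aff p1 W1 /\ aff c Uc \subset aff p2 W2.
  by split; apply: subset_trans hs _; [exact: subsetIl | exact: subsetIr].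
have [h1 c1] := aff_sub s1; have [h2 c2] := aff_sub s2.
split.
  have -> : p2 - p1 = (c - p1) + - (c - p2) by rewrite opprB (addrC (c - p1)) addrA subrK.
  by apply: memv_add => //; rewrite memvN.
by rewrite -hd; apply: dimvS; rewrite subv_cap h1 h2.
Qed.

Lemma meets_of_bad t (p1 p2 : pt) (U1 U2 : {vspace pt}) :
  p2 - p1 \in (U1 + U2)%VS -> (t <= \dim (U1 :&: U2))%N ->
  meets_ge (aff p1 U1) (aff p2 U2) t.
Proof.
move=> /memv_addP [u1 hu1 [u2 hu2 hv]] ht.
have [Y [hY dY]] := subsub ht.
have e : p2 = p1 + u1 + u2 by rewrite -addrA -hv addrC subrK.
exists (aff (p1 + u1) Y); split; first by exists (p1 + u1), Y.
apply/subsetP => x; rewrite !inE => hx.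
have hx' : x - (p1 + u1) \in (U1 :&: U2)%VS by exact: (subvP hY).
rewrite memv_cap in hx'; case/andP: hx' => hx1 hx2.
apply/andP; split.
  have -> : x - p1 = (x - (p1 + u1)) + u1 by rewrite opprD addrA subrK.
  exact: rpredD.
have -> : x - p2 = (x - (p1 + u1)) - u2 by rewrite e !opprD !addrA.
exact: rpredB.
Qed.

Lemma meets_self t k (B : {set pt}) : is_aff B k -> (t <= k)%N -> meets_ge B B t.
Proof.
move=> [p [U [hd ->]]] ht; rewrite -hd in ht.
have [Y [hY dY]] := subsub ht.
exists (aff p Y); split; first by exists p, Y.
by rewrite setIid; apply/subsetP => x; rewrite !inE; apply: (subvP hY).
Qed.

Lemma meets_sub t (A B A' B' : {set pt}) :
  meets_ge A B t -> A \subset A' -> B \subset B' -> meets_ge A' B' t.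
Proof.
move=> [C [hC hs]] hA hB; exists C; split=> //.
by apply: subset_trans hs _; apply: setISS.
Qed.

Lemma meetsC t (A B : {set pt}) : meets_ge A B t -> meets_ge B A t.
Proof. by move=> [C [hC hs]]; exists C; rewrite setIC. Qed.
End Aff.

Theorem mainTheorem11 (F : finFieldType) (n k t : nat)
  (S : {set {set 'rV[F]_n}}) (psi : nat) :
  (t.+1 < k)%N -> (2 * k - t < n)%N ->
  maximal_t_intersecting k t S ->
  is_psi t S psi ->
  [/\ ((t <= psi)%N /\ (psi <= k)%N /\ (psi = t -> is_pencil k t S)),
      (forall T, is_aff T psi -> t_blocking t S T ->
         forall B, is_aff B k -> T \subset B -> B \in S)
    & (forall T1 T2, is_aff T1 psi -> t_blocking t S T1 ->
         is_aff T2 psi -> t_blocking t S T2 -> meets_ge T1 T2 t)].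
Proof.
move=> hkt hn [[hSaff hSpair] hmax] [[T0 [hT0 hT0b]] hpsimin].
have hkn : (k <= n)%N by lia.
have hn2 : (2 * k < n + t)%N by lia.
have htk : (t <= k)%N by lia.
have P2 : forall T d, is_aff T d -> t_blocking t S T ->
    forall B, is_aff B k -> T \subset B -> B \in S.
  move=> T d _ hTb B hB hTB; apply/negPn/negP => hBS.
  apply: (hmax B hB hBS); split.
    by move=> A; rewrite in_setU1 => /orP[/eqP-> | hA] //; exact: hSaff.
  have hBA : forall A, A \in S -> meets_ge B A t.
    by move=> A hA; apply: meets_sub (hTb A hA) hTB (subxx _).
  move=> A A'; rewrite !in_setU1 => /orP[/eqP-> | hA] /orP[/eqP-> | hA'].
  - exact: meets_self hB htk.
  - exact: hBA.
  - exact: meetsC (hBA _ hA).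
  - exact: hSpair.
have [A hA] : exists A, A \in S.
  case: (set_0Vmem S) => [S0 | [A hA]]; last by exists A.
  exfalso.
  have [Y [_ dY]] := @subsub _ _ (fullv : {vspace 'rV[F]_n}) k ltac:(by rewrite dimrv).
  have hB : is_aff [set x : 'rV[F]_n | x - 0 \in Y] k by exists 0, Y.
  apply: (hmax _ hB); first by rewrite S0 in_set0.
  split; rewrite S0 setU0.
    by move=> A; rewrite in_set1 => /eqP->.
  by move=> A A'; rewrite !in_set1 => /eqP-> /eqP->; exact: meets_self hB htk.
have hpk : (psi <= k)%N.
  by apply: (hpsimin k A (hSaff A hA)) => A' hA'; exact: hSpair.
have htp : (t <= psi)%N.
  have [C [[c [Uc [dC ->]]] hs]] := hT0b A hA.
  case: hT0 => p [U [dU eT]]; rewrite eT in hs.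
  have [hsub _] := aff_sub (subset_trans hs (subsetIl _ _)).
  by rewrite -dC -dU; exact: dimvS.
split.
- split=> //; split=> // hpt.
  exists T0; split; first by rewrite -hpt.
  move=> A1; split; last first.
    by case=> hA1 hsub; apply: P2 hT0 hT0b A1 hA1 hsub.
  move=> hA1; split; first exact: hSaff.
  have [C [[c [Uc [dC eC]]] hs]] := hT0b A1 hA1.
  case: hT0 => p [U [dU eT]].
  have hCT : C \subset T0 by apply: subset_trans hs (subsetIl _ _).
  have hCA : C \subset A1 by apply: subset_trans hs (subsetIr _ _).
  rewrite eT eC in hCT; have [hsub hcp] := aff_sub hCT.
  have eU : Uc = U by apply/eqP; rewrite eqEdim hsub dC dU hpt leqnn.
  apply: subset_trans _ hCA; rewrite eT eC eU; apply/subsetP => x; rewrite !inE => hx.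
  have -> : x - c = (x - p) - (c - p) by rewrite opprB addrA subrK.
  exact: memvB.
- by move=> T hT hTb; exact: P2 hT hTb.
- move=> T1 T2 [p1 [U1 [d1 ->]]] hb1 [p2 [U2 [d2 ->]]] hb2.
  case: (boolP (good t (p2 - p1) U1 U2)) => hg; last first.
    move: hg; rewrite /good negb_or negbK -leqNgt => /andP[hv hd].
    exact: meets_of_bad.
  have [W1 [W2 [s1 s2 e1 e2 g]]] := ext2 (leq_trans (eq_leq d1) hpk)
       (leq_trans (eq_leq d2) hpk) hkn hn2 hg.
  have hB1 : [set x : 'rV[F]_n | x - p1 \in W1] \in S.
    have hT : is_aff [set x : 'rV[F]_n | x - p1 \in U1] psi by exists p1, U1.
    apply: (P2 _ psi hT hb1); first by exists p1, W1.
    by apply/subsetP => x; rewrite !inE; apply: (subvP s1).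
  have hB2 : [set x : 'rV[F]_n | x - p2 \in W2] \in S.
    have hT : is_aff [set x : 'rV[F]_n | x - p2 \in U2] psi by exists p2, U2.
    apply: (P2 _ psi hT hb2); first by exists p2, W2.
    by apply/subsetP => x; rewrite !inE; apply: (subvP s2).
  have [hv hd] := bad_of_meets (hSpair _ _ hB1 hB2).
  by move: g; rewrite /good hv /= ltnNge hd.
Qed.
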